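(* Let $(M,d)$ be a complete separable metric space. Then $c_0$ bi-Lipschitzly embeds into $M$ if and only if $\mathrm{I}^{\mathrm{Lip}}_{c_0}(M)\ge\omega_1$.
   Context: For finite $G\subset\mathbb{N}$ and countable $\mathbb{E}\subset\mathbb{R}$ with $0\in\mathbb{E}$, $[\mathbb{E},G]=\{f:\mathbb{N}\to\mathbb{E}:\mathrm{supp}(f)\subset G\}$, viewed as a subset of $c_0$. $\mathbb{E}$-bunches, the order $\preceq$ (for $\chi=(x_f)_{f\in[\mathbb{E},F]}$, $\psi=(y_f)_{f\in[\mathbb{E},G]}$: $F$ is an initial segment of $G$ and $y_f=x_f$ on $[\mathbb{E},F]$), $\mathbb{E}$-vines (sets of bunches closed under $\preceq$-predecessors), derivatives $\mathcal{V}^{(1)}=\mathcal{V}\setminus\{\preceq\text{-maximal elements}\}$, $\mathcal{V}^{(\alpha+1)}=(\mathcal{V}^{(\alpha)})^{(1)}$, $\mathcal{V}^{(\alpha)}=\bigcap_{\beta<\alpha}\mathcal{V}^{(\beta)}$ at limits, and the index $o(\mathcal{V})=\min\{\alpha:\mathcal{V}^{(\alpha)}=\emptyset\}$ (with $o(\mathcal{V})=\infty\ge\omega_1$ if no such ordinal exists). For $C>0$, $\mathcal{V}(M,\mathbb{Q},C)$ is the set of all $(x_f)_{f\in[\mathbb{Q},G]}$, $G\in[\mathbb{N}]^{<\omega}$, $x_f\in M$, with $\frac1C\|f-g\|_\infty\le d(x_f,x_g)\le C\|f-g\|_\infty$ for all $f,g\in[\mathbb{Q},G]$. The Lipschitz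 $c_0$-index is $\mathrm{I}^{\mathrm{Lip}}_{c_0}(M)=\sup\{o(\mathcal{V}(M,\mathbb{Q},C)):C>0\}$. *)

(* Defs.v *)
From HB Require Import structures.
From mathcomp Require Import all_boot all_order all_algebra.
From mathcomp Require Import boolp classical_sets reals.
Set Implicit Arguments. Unset Strict Implicit. Unset Printing Implicit Defensive.
Import Order.TTheory GRing.Theory Num.Theory.
Local Open Scope ring_scope.
Local Open Scope classical_set_scope.

Section Defs.
Variable R : realType.

Definition is_metric (M : Type) (d : M -> M -> R) : Prop :=
  (forall x y, d x y = 0 <-> x = y) /\
  (forall x y, d x y = d y x) /\
  (forall x y z, d x z <= d x y + d y z).

Definition metric_complete (M : Type) (d : M -> M -> R) : Prop :=
  forall u : nat -> M,
    (forall e, 0 < e -> exists N, forall m n, (N <= m)%N -> (N <= n)%N ->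
        d (u m) (u n) < e) ->
    exists l, forall e, 0 < e -> exists N, forall n, (N <= n)%N -> d (u n) l < e.

Definition metric_separable (M : Type) (d : M -> M -> R) : Prop :=
  exists D : M -> Prop,
    (exists g : M -> nat, forall x y, D x -> D y -> g x = g y -> x = y) /\
    (forall x e, 0 < e -> exists y, D y /\ d x y < e).

Definition in_c0 (x : nat -> R) : Prop :=
  forall e, 0 < e -> exists N, forall n, (N <= n)%N -> `|x n| < e.

Definition supnorm (x : nat -> R) : R := sup [set `|x n| | n in [set: nat]].

Definition c0_bilip_embeds (M : Type) (d : M -> M -> R) : Prop :=
  exists (F : (nat -> R) -> M) (a b : R), 0 < a /\ 0 < b /\
    forall x y, in_c0 x -> in_c0 y ->
      a * supnorm (fun n => x n - y n) <= d (F x) (F y) /\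
      d (F x) (F y) <= b * supnorm (fun n => x n - y n).

Definition in_QG (G : seq nat) (f : nat -> rat) : Prop :=
  forall n, f n != 0 -> n \in G.

Definition qdist (f g : nat -> rat) : R :=
  supnorm (fun n => ratr (f n) - ratr (g n)).

(* a bunch (x_f)_{f in [Q,G]} is represented by the finite set G (given as a
   list, only its members matter) and a map x, only its values on [Q,G]
   matter. *)
Record bunch (M : Type) := Bunch { bG : seq nat ; bx : (nat -> rat) -> M }.

Definition init_seg (F G : seq nat) : Prop :=
  (forall a, a \in F -> a \in G) /\
  (forall a b, a \in F -> b \in G -> (b < a)%N -> b \in F).

Definition bprec (M : Type) (chi psi : bunch M) : Prop :=
  init_seg (bG chi) (bG psi) /\
  forall f, in_QG (bG chi) f -> bx psi f = bx chi f.

Definition bprec_strict (M : Type) (chi psi : bunch M) : Prop :=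
  bprec chi psi /\ exists b, b \in bG psi /\ b \notin bG chi.

Definition vderiv1 (M : Type) (V : bunch M -> Prop) : bunch M -> Prop :=
  fun chi => V chi /\ exists psi, V psi /\ bprec_strict chi psi.

Definition VMQC (M : Type) (d : M -> M -> R) (C : R) : bunch M -> Prop :=
  fun chi => forall f g, in_QG (bG chi) f -> in_QG (bG chi) g ->
    C^-1 * qdist f g <= d (bx chi f) (bx chi g) /\
    d (bx chi f) (bx chi g) <= C * qdist f g.

(* Ordinals are represented by elements of well-ordered types: the element w
   of a strict well-order (W,lt) stands for the order type of {v | lt v w}. *)
Definition imm_pred (W : Type) (lt : W -> W -> Prop) (v w : W) : Prop :=
  lt v w /\ forall u, lt v u -> ~ lt u w.

Definition vderiv_step (M W : Type) (lt : W -> W -> Prop) (V : bunch M -> Prop)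
  (w : W) (rec : forall v, lt v w -> bunch M -> Prop) : bunch M -> Prop :=
  fun chi =>
    ((~ exists v, lt v w) -> V chi) /\
    (forall v (h : lt v w), imm_pred lt v w -> vderiv1 (rec v h) chi) /\
    ((exists v, lt v w) -> (~ exists v, imm_pred lt v w) ->
       forall v (h : lt v w), rec v h chi).

Definition vderiv (M W : Type) (lt : W -> W -> Prop) (wf : well_founded lt)
  (V : bunch M -> Prop) : W -> bunch M -> Prop :=
  Fix wf (fun _ => bunch M -> Prop) (@vderiv_step M W lt V).

Definition countable_strict_wellorder (W : Type) (lt : W -> W -> Prop) : Prop :=
  (forall a b c, lt a b -> lt b c -> lt a c) /\
  (forall a b, lt a b \/ a = b \/ lt b a) /\
  (exists g : W -> nat, injective g).

(* I^Lip_{c0}(M) >= omega_1, i.e. sup_{C>0} o(V(M,Q,C)) >= omega_1, i.e.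
   for every countable ordinal alpha there is C > 0 with o(V(M,Q,C)) > alpha,
   i.e. V(M,Q,C)^{(alpha)} <> empty. *)
Definition Lip_c0_index_ge_omega1 (M : Type) (d : M -> M -> R) : Prop :=
  forall (W : Type) (lt : W -> W -> Prop) (wf : well_founded lt),
    countable_strict_wellorder lt ->
    forall w : W, exists C : R, 0 < C /\ exists chi, vderiv wf (VMQC d C) w chi.

End Defs.

(* Main.v *)
Set Warnings "-notation-overridden,-ambiguous-paths".
Require Import Defs.
From HB Require Import structures.
From mathcomp Require Import all_boot all_order all_algebra.
From mathcomp Require Import boolp classical_sets reals.
From mathcomp Require Import lra.
From Stdlib Require Import FunctionalExtensionality.
Set Implicit Arguments. Unset Strict Implicit. Unset Printing Implicit Defensive.
Import Order.TTheory GRing.Theory Num.Theory.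
Fixpoint pref (t s : seq nat) : bool :=
  match t, s with
  | [::], _ => true
  | _ :: _, [::] => false
  | b :: t', a :: s' => (b == a) && pref t' s'
  end.

Lemma prefP t s : pref t s <-> exists r, s = t ++ r.
Proof.
elim: t s => [|b t IH] [|a s] /=; split => //.
- by move=> _; exists [::].
- by move=> _; exists (a :: s).
- by case=> r.
- by case/andP=> /eqP -> /IH [r ->]; exists r.
- by case=> r [-> ->]; rewrite eqxx /=; apply/IH; exists r.
Qed.

Lemma pref_cat t r : pref t (t ++ r).
Proof. by apply/prefP; exists r. Qed.

Lemma pref_trans u t s : pref u t -> pref t s -> pref u s.
Proof.
move=> /prefP [r1 ->] /prefP [r2 ->]; apply/prefP; exists (r1 ++ r2).
by rewrite catA.
Qed.

Fixpoint kb (s t : seq nat) : bool :=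
  match s, t with
  | s0, [::] => s0 != [::]
  | [::], _ :: _ => false
  | a :: s', b :: t' => (a < b) || ((a == b) && kb s' t')
  end.

Lemma kb_irr s : kb s s = false.
Proof. by elim: s => [|a s IH] //=; rewrite ltnn eqxx IH. Qed.

Lemma kb_trans s t u : kb s t -> kb t u -> kb s u.
Proof.
elim: u s t => [|c u IH] [|a s] [|b t] //=.
move=> /orP [ab|/andP [/eqP eab st]] /orP [bc|/andP [/eqP ebc tu]].
- by rewrite (ltn_trans ab bc).
- by subst c; rewrite ab.
- by subst b; rewrite bc.
- by subst b c; rewrite eqxx (IH _ _ st tu) orbT.
Qed.

Lemma kb_total s t : s <> t -> kb s t \/ kb t s.
Proof.
elim: s t => [|a s IH] [|b t] //=.
- by move=> _; right.
- by move=> _; left.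
move=> neq; case: (ltngtP a b) => [ab|ba|eab]; [by left|by right|].
subst b; rewrite ?eqxx ?ltnn /=; case: (IH t) => [st|st|st]; [|by left|by right].
by move: st neq => ->.
Qed.

Lemma kb_cat t r r' : kb (t ++ r) (t ++ r') = kb r r'.
Proof. by elim: t => [|a t IH] //=; rewrite ltnn eqxx IH. Qed.

Lemma kb_catl t r : kb (t ++ r) t = (r != [::]).
Proof. by have := kb_cat t r [::]; rewrite cats0 => ->; case: r. Qed.

Lemma kb_left s t u : kb s (t ++ u) -> ~~ pref t s -> kb s t.
Proof.
elim: t s => [|b t IH] [|a s] //=.
move=> /orP [ab|/andP [/eqP eab st]] np; first by rewrite ab.
subst b; rewrite eqxx /= in np *; by rewrite (IH _ st np) orbT.
Qed.

Section KBwf.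
Variable T : seq nat -> Prop.
Hypothesis Tpref : forall t s, pref t s -> T s -> T t.

Definition ext (u t : seq nat) : Prop := T u /\ exists a, u = t ++ [:: a].
Definition ltT (s t : seq nat) : Prop := T s /\ T t /\ kb s t.

Lemma sub_acc t : Acc ext t ->
  (forall s, T s -> kb s t -> ~~ pref t s -> Acc ltT s) ->
  forall r, T (t ++ r) -> Acc ltT (t ++ r).
Proof.
elim=> {}t _ IH Hleft.
have A : forall a r, T (t ++ a :: r) -> Acc ltT (t ++ a :: r).
  elim/ltn_ind=> a IHa r Tr.
  have Tu : T (t ++ [:: a]).
    apply: (Tpref _ Tr); have -> : t ++ a :: r = (t ++ [:: a]) ++ r by rewrite -catA.
    exact: pref_cat.
  have Hl' : forall s, T s -> kb s (t ++ [:: a]) -> ~~ pref (t ++ [:: a]) s -> Acc ltT s.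
    move=> s Ts ks nps; case ps: (pref t s).
      move/prefP: ps => [[|b r'] E]; subst s.
        by rewrite kb_cat in ks.
      rewrite kb_cat /= in ks; move: nps.
      have -> : pref (t ++ [:: a]) (t ++ b :: r') = (a == b).
        by elim: (t) => [|c t' IHt] //=; [rewrite andbT | rewrite eqxx].
      case/orP: ks => [ba|/andP [/eqP -> _]]; last by rewrite eqxx.
      by move=> _; apply: IHa.
    apply: Hleft => //; first by apply: (kb_left ks); rewrite ps.
    by rewrite ps.
  have H2 := IH (t ++ [:: a]) (conj Tu (ex_intro _ a erefl)) Hl' r.
  have E : (t ++ [:: a]) ++ r = t ++ a :: r by rewrite -catA.
  rewrite E in H2; exact: H2 Tr.
case=> [|a r] Tr; last exact: A.
rewrite cats0 in Tr *; constructor=> s [Ts [_ ks]].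
case ps: (pref t s); last by apply: Hleft => //; rewrite ps.
move/prefP: ps => [[|a r'] E]; subst s.
  by rewrite cats0 kb_irr in ks.
exact: A.
Qed.

Lemma all_acc : Acc ext [::] -> forall s, T s -> Acc ltT s.
Proof. by move=> H s Ts; apply: (sub_acc H) => // s' _ _; rewrite /=. Qed.

Lemma branch_of_nacc : ~ Acc ext [::] ->
  exists b : nat -> seq nat, b 0%N = [::] /\
    forall k, T (b k.+1) /\ exists a, b k.+1 = b k ++ [:: a].
Proof.
move=> nA.
have step : forall t : {t | ~ Acc ext t}, exists u : {u | ~ Acc ext u},
    ext (proj1_sig u) (proj1_sig t).
  case=> t nt /=; apply: contrapT => H; apply: nt; constructor => u eut.
  apply: contrapT => nu; apply: H; by exists (exist _ u nu).
pose f t := proj1_sig (cid (step t)).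
pose seqb := fix g (k : nat) := match k with 0 => exist _ [::] nA | k'.+1 => f (g k') end.
exists (fun k => proj1_sig (seqb k)); split => // k /=.
exact: (proj2_sig (cid (step (seqb k)))).
Qed.
End KBwf.

Section Deriv.
Variables (M W : Type) (lt : W -> W -> Prop) (wf : well_founded lt).
Variable V : bunch M -> Prop.

Lemma vderiv_eq w : vderiv wf V w = @vderiv_step M W lt V w (fun v _ => vderiv wf V v).
Proof.
rewrite /vderiv Fix_eq // => x f g H.
have -> : f = g by apply: functional_extensionality_dep => y;
  apply: functional_extensionality_dep => p; apply: H.
by [].
Qed.

Hypothesis trans : forall a b c, lt a b -> lt b c -> lt a c.
Hypothesis tri : forall a b, lt a b \/ a = b \/ lt b a.
Variable pi : bunch M -> W.
Hypothesis dec : forall chi psi, V chi -> V psi -> bprec_strict chi psi ->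
  lt (pi psi) (pi chi).

Lemma lt_irr a : ~ lt a a.
Proof. by elim: (wf a) => x _ IH H; apply: (IH x H H). Qed.

Lemma vderiv_dec w : forall chi, vderiv wf V w chi -> V chi /\ ~ lt (pi chi) w.
Proof.
elim: (wf w) => {}w _ IH chi; rewrite vderiv_eq => -[H0 [Hs Hl]].
have [[v vw]|nv] := pselect (exists v, lt v w); last first.
  by split; [apply: H0|move=> h; apply: nv; exists (pi chi)].
have [[v' iv]|ni] := pselect (exists v, imm_pred lt v w).
  have [[psi [Hpsi st]] chiv] : (exists psi, vderiv wf V v' psi /\ bprec_strict chi psi) /\
      vderiv wf V v' chi.
    by have [? ?] := Hs v' (proj1 iv) iv; split.
  have [Vc nc] := IH v' (proj1 iv) chi chiv.
  have [Vp np] := IH v' (proj1 iv) psi Hpsi.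
  split => // lcw; have dd := dec Vc Vp st.
  case: (tri (pi psi) v') => [//|[e|vp]].
    by subst v'; apply: (proj2 iv (pi chi)).
  by apply: (proj2 iv (pi chi)) => //; apply: (trans vp dd).
have Hl' := Hl (ex_intro _ v vw) ni.
split; first exact: (proj1 (IH v vw chi (Hl' v vw))).
move=> uw; apply: ni; exists (pi chi); split => // u lu uw'.
exact: (proj2 (IH u uw' chi (Hl' u uw')) lu).
Qed.
End Deriv.
Local Open Scope ring_scope.
Local Open Scope classical_set_scope.

Section Sup.
Variable R : realType.
Implicit Types v : nat -> R.

Lemma le_supnorm v B n : (forall k, `|v k| <= B) -> `|v n| <= supnorm v.
Proof.
move=> hB; rewrite /supnorm; apply: ub_le_sup; last by exists n.
by exists B => y [k _ <-].
Qed.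

Lemma supnorm_le v e : (forall n, `|v n| <= e) -> supnorm v <= e.
Proof.
move=> he; rewrite /supnorm; apply: ge_sup; first by exists `|v 0%N|, 0%N.
by move=> y [k _ <-].
Qed.

Lemma supnorm_ge0 v : 0 <= supnorm v.
Proof.
rewrite /supnorm; have [h|h] := pselect (has_sup [set `|v n| | n in [set: nat]]).
  apply: (le_trans (normr_ge0 (v 0%N))).
  by apply: (sup_upper_bound h); exists 0%N.
by rewrite sup_out.
Qed.
End Sup.

Definition bnd (G : seq nat) : nat := foldr (fun a m => maxn a.+1 m) 0%N G.
Lemma bnd_gt (G : seq nat) a : a \in G -> (a < bnd G)%N.
Proof.
rewrite /bnd; elim: G => [|b G IH] //=; rewrite in_cons => /orP [/eqP ->|aG].
  by rewrite leq_maxl.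
by rewrite (leq_trans _ (leq_maxr _ _)) // IH.
Qed.

Lemma bnd_lt (G : seq nat) k : (k < bnd G)%N -> exists a, a \in G /\ (k <= a)%N.
Proof.
rewrite /bnd; elim: G => [|b G IH] //=; rewrite leq_max => /orP [kb|/IH [a [aG ka]]].
  by exists b; rewrite in_cons eqxx.
by exists a; rewrite in_cons aG orbT.
Qed.

Lemma bnd_le (G : seq nat) m : (forall a, a \in G -> (a < m)%N) -> (bnd G <= m)%N.
Proof.
rewrite /bnd; elim: G => [|b G IH] //= H; rewrite geq_max H ?in_cons ?eqxx //.
by apply: IH => a aG; apply: H; rewrite in_cons aG orbT.
Qed.

Lemma in_QG_zero G (f : nat -> rat) n : in_QG G f -> (bnd G <= n)%N -> f n = 0.
Proof.
move=> hf hn; apply/eqP; apply: contraT => /hf /bnd_gt; by rewrite ltnNge hn.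
Qed.

Section Easy.
Variables (R : realType) (M : Type) (d : M -> M -> R).

Lemma easy_dir : c0_bilip_embeds d -> Lip_c0_index_ge_omega1 d.
Proof.
move=> [F [a [b [a0 [b0 hF]]]]] W lt wf _ w.
pose C := Num.max b a^-1.
have C0 : 0 < C by rewrite lt_max b0.
pose Fq (f : nat -> rat) := F (fun n => ratr (f n)).
have c0f : forall G f, in_QG G f -> in_c0 (fun n => (ratr (f n) : R)).
  move=> G f hf e e0; exists (bnd G) => n hn.
  by rewrite (in_QG_zero hf hn) rmorph0 normr0.
have V : forall G, VMQC d C (Bunch G Fq).
  move=> G f g hf hg /=.
  have [h1 h2] := hF _ _ (c0f _ _ hf) (c0f _ _ hg).
  have q0 := supnorm_ge0 (fun n => (ratr (f n) : R) - ratr (g n)).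
  rewrite /qdist; split.
    apply: le_trans h1; apply: ler_wpM2r => //.
    have -> : a = a^-1^-1 by rewrite invrK.
    by rewrite lef_pV2 ?posrE ?invr_gt0 // le_max lexx orbT.
  apply: (le_trans h2); apply: ler_wpM2r => //.
  by rewrite le_max lexx.
exists C; split => //; exists (Bunch [::] Fq).
move: [::]; elim: (wf w) => {}w _ IH G; rewrite vderiv_eq; split; [|split].
- by move=> _; apply: V.
- move=> v h _; split; first exact: IH.
  exists (Bunch (G ++ [:: bnd G]) Fq); split; first exact: IH.
  split; last first.
    exists (bnd G); rewrite /= mem_cat mem_seq1 eqxx orbT; split => //.
    by apply/negP => /bnd_gt; rewrite ltnn.
  split=> //=; split.
    by move=> x xG; rewrite mem_cat xG.
  move=> x y xG; rewrite mem_cat mem_seq1 => /orP [//|/eqP ->].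
  by move=> h'; have := bnd_gt xG; rewrite ltnNge (ltnW h').
- by move=> _ _ v h; apply: IH.
Qed.
End Easy.
Definition Gs (G : seq nat) : seq nat := [seq k <- iota 0 (bnd G) | k \in G].

Lemma mem_Gs G k : (k \in Gs G) = (k \in G).
Proof.
rewrite mem_filter mem_iota /= add0n; case kG: (k \in G) => //=.
by rewrite bnd_gt.
Qed.

Lemma uniq_Gs G : uniq (Gs G).
Proof. exact: filter_uniq (iota_uniq _ _). Qed.

Lemma Gs_ext F G : init_seg F G -> exists X, Gs G = Gs F ++ X.
Proof.
move=> [sub ini].
have le : (bnd F <= bnd G)%N by apply: bnd_le => a aF; apply: bnd_gt; apply: sub.
rewrite /Gs -(subnKC le) iotaD filter_cat add0n.
eexists; congr (_ ++ _).
apply: eq_in_filter => k; rewrite mem_iota add0n /= => kF.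
apply/idP/idP => [kG|/sub //].
have [a [aF ka]] := bnd_lt kF.
case: (ltngtP k a) => [kla|akl|eka]; last by subst.
  exact: (ini a k aF kG kla).
by rewrite ltnNge ka in akl.
Qed.

Lemma Gs_strict (M : Type) (chi psi : bunch M) : bprec_strict chi psi ->
  exists X, X != [::] /\ Gs (bG psi) = Gs (bG chi) ++ X.
Proof.
move=> [[ini _] [b [bp bc]]]; have [X E] := Gs_ext ini; exists X; split => //.
apply/negP => /eqP X0; move: bp; rewrite -mem_Gs E X0 cats0 mem_Gs.
by rewrite (negbTE bc).
Qed.

Lemma take_cat_le (T : Type) i (s1 s2 : seq T) : (i <= size s1)%N ->
  take i (s1 ++ s2) = take i s1.
Proof.
rewrite take_cat; case: ltnP => // h1 h2.
have -> : i = size s1 by apply/eqP; rewrite eqn_leq h1 h2.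
by rewrite subnn take0 cats0 take_size.
Qed.

Definition vals (i : nat) : seq int :=
  [seq Posz k | k <- iota 0 (i.+1 ^ 2).+1] ++ [seq Negz k | k <- iota 0 (i.+1 ^ 2)].

Fixpoint tuples (i m : nat) : seq (seq int) :=
  if m is m'.+1 then [seq k :: t | k <- vals i, t <- tuples i m'] else [:: [::]].

Lemma mem_vals i z : (absz z <= i.+1 ^ 2)%N -> z \in vals i.
Proof.
rewrite /vals mem_cat; case: z => k hk.
  by apply/orP; left; apply/mapP; exists k => //; rewrite mem_iota add0n ltnS.
by apply/orP; right; apply/mapP; exists k => //; rewrite mem_iota add0n.
Qed.

Lemma mem_tuples i t : all (fun z => absz z <= i.+1 ^ 2)%N t -> t \in tuples i (size t).
Proof.
elim: t => [|z t IH]; first by [].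
move=> /andP [hz ht].
change (z :: t \in [seq k :: s | k <- vals i, s <- tuples i (size t)]).
by apply: (allpairs_f (fun k s => k :: s)); [apply: mem_vals|apply: IH].
Qed.

Definition mkf (i : nat) (G : seq nat) (t : seq int) : nat -> rat :=
  fun n => if n \in G then (nth 0 t (index n G))%:~R / (i.+1)%:R else 0.

Lemma mkf_supp i G t : in_QG G (mkf i G t).
Proof. by move=> n; rewrite /mkf; case: (n \in G); rewrite ?eqxx. Qed.

Section Coding.
Variables (R : realType) (M : Type) (d : M -> M -> R).
Variables (D : M -> Prop) (gD : M -> nat).
Hypothesis gDinj : forall x y, D x -> D y -> gD x = gD y -> x = y.
Hypothesis Ddense : forall x e, 0 < e -> exists y, D y /\ d x y < e.

Definition eps (i : nat) : R := (i.+1%:R)^-1.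

Lemma eps_gt0 i : 0 < eps i.
Proof. by rewrite invr_gt0 ltr0n. Qed.

Lemma approx_ex i y : exists z, D z /\ d y z < eps i.
Proof. exact: Ddense (eps_gt0 i). Qed.

Definition approx i y := proj1_sig (cid (approx_ex i y)).

Lemma approxP i y : D (approx i y) /\ d y (approx i y) < eps i.
Proof. exact: proj2_sig (cid (approx_ex i y)). Qed.

Definition code (chi : bunch M) (i : nat) : nat :=
  pickle (take i (Gs (bG chi)),
    [seq gD (approx i (bx chi (mkf i (take i (Gs (bG chi))) t))) | t <- tuples i i]).

Definition piL (chi : bunch M) : seq nat :=
  [seq code chi i | i <- iota 1 (size (Gs (bG chi)))].

Lemma piL_strict chi psi : bprec_strict chi psi ->
  exists r, r != [::] /\ piL psi = piL chi ++ r.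
Proof.
move=> hs; have [[_ hx] _] := hs; have [X [XN E]] := Gs_strict hs.
rewrite /piL E size_cat iotaD map_cat; eexists; split; last first.
  congr (_ ++ _); apply/eq_in_map => i; rewrite mem_iota => /andP [_ i2].
  rewrite /code E take_cat_le; last by rewrite -ltnS.
  congr pickle; congr pair; apply: eq_map => t; congr gD; congr approx.
  apply: hx => n /mkf_supp /mem_take; by rewrite mem_Gs.
by rewrite -size_eq0 size_map size_iota size_eq0.
Qed.

Definition Tn (t : seq nat) : Prop :=
  exists (n : nat) chi, (0 < n)%N /\ VMQC d n%:R chi /\ pref t (n :: piL chi).

Lemma Tn_pref t s : pref t s -> Tn s -> Tn t.
Proof.
move=> pts [n [chi [n0 [V ps]]]]; exists n, chi; split => //; split => //.
exact: pref_trans pts ps.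
Qed.
End Coding.
Section HardComb.
Variables (R : realType) (M : Type) (d : M -> M -> R).
Hypothesis hmet : is_metric d.
Variables (D : M -> Prop) (gD : M -> nat).
Hypothesis gDinj : forall x y, D x -> D y -> gD x = gD y -> x = y.
Hypothesis Ddense : forall x e, 0 < e -> exists y, D y /\ d x y < e.

Local Notation T := (Tn gD Ddense).

Lemma supnorm0 (v : nat -> R) : (forall n, v n = 0) -> supnorm v = 0.
Proof.
move=> h; apply/eqP; rewrite eq_le supnorm_ge0 andbT.
by apply: supnorm_le => n; rewrite h normr0.
Qed.

Lemma VMQC_mono (C C' : R) chi : 0 < C -> C <= C' -> VMQC d C chi -> VMQC d C' chi.
Proof.
move=> C0 CC' V f g hf hg; have [h1 h2] := V f g hf hg.
have q0 : 0 <= qdist R f g by apply: supnorm_ge0.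
have C'0 : 0 < C' by apply: lt_le_trans CC'.
split.
  apply: le_trans h1; apply: ler_wpM2r => //.
  by rewrite lef_pV2 ?posrE.
by apply: le_trans h2 _; apply: ler_wpM2r.
Qed.

Lemma hard_comb : Lip_c0_index_ge_omega1 d -> ~ Acc (ext T) [::].
Proof.
move=> H HA.
have [m0 _] : exists m0 : M, True.
  have wfu : well_founded (fun _ _ : unit => False) by move=> x; constructor.
  have cu : countable_strict_wellorder (fun _ _ : unit => False).
    split => //; split; first by case; case; right; left.
    by exists (fun _ => 0%N) => [[] []].
  have [C [_ [chi _]]] := H unit _ wfu cu tt.
  by exists (bx chi (fun _ => 0)).
have T0 : T [::].
  exists 1%N, (Bunch [::] (fun _ => m0)); split => //; split => //.
  move=> f g hf hg /=.
  have -> : qdist R f g = 0.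
    apply: supnorm0 => n.
    have fn : f n = 0 by apply/eqP; apply: contraT => /hf.
    have gn : g n = 0 by apply/eqP; apply: contraT => /hg.
    by rewrite fn gn rmorph0 subrr.
  by rewrite !mulr0 (proj2 (proj1 hmet m0 m0) erefl) lexx.
pose W := {t : seq nat | T t}.
pose ltK (x y : W) := kb (proj1_sig x) (proj1_sig y).
have vinj : forall x y : W, proj1_sig x = proj1_sig y -> x = y.
  move=> [x hx] [y hy] /= exy; subst y; congr exist; exact: Prop_irrelevance.
have wfW : well_founded ltK.
  suff S : forall t, Acc (ltT T) t -> forall Tt : T t, Acc ltK (exist _ t Tt).
    by move=> [t Tt]; apply: S; apply: (all_acc (@Tn_pref _ _ _ _ gD Ddense) HA Tt).
  move=> t; elim=> {}t _ IH Tt; constructor => [[s Ts]] kst.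
  by apply: IH; split; [|split].
have cW : countable_strict_wellorder ltK.
  split; first by move=> a b c; apply: kb_trans.
  split.
    move=> a b; case: (pselect (a = b)) => [->|nab]; first by right; left.
    case: (@kb_total (proj1_sig a) (proj1_sig b)) => [e|h|h].
    - by apply: nab; apply: vinj.
    - by left.
    - by right; right.
  by exists (fun x => pickle (proj1_sig x)) => x y /(pcan_inj pickleK) /vinj.
pose w0 : W := exist _ [::] T0.
have [C [C0 [chi hchi]]] := H W ltK wfW cW w0.
pose nC := (Num.truncn C).+1.
have CnC : C <= nC%:R by rewrite ltW // truncnS_gt.
have TV : forall psi, VMQC d C psi -> T (nC :: piL gD Ddense psi).
  move=> psi Vp; exists nC, psi; split => //; split; last by apply/prefP; exists [::]; rewrite cats0.
  exact: VMQC_mono C0 CnC Vp.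
pose pi (psi : bunch M) : W :=
  match pselect (T (nC :: piL gD Ddense psi)) with
  | left h => exist _ _ h | right _ => w0 end.
have piE : forall psi, VMQC d C psi -> proj1_sig (pi psi) = nC :: piL gD Ddense psi.
  move=> psi Vp; rewrite /pi; case: pselect => // h; by case: h; apply: TV.
have dec : forall a b, VMQC d C a -> VMQC d C b -> bprec_strict a b -> ltK (pi b) (pi a).
  move=> a b Va Vb st; rewrite /ltK (piE _ Va) (piE _ Vb) /=.
  have [r [rN ->]] := piL_strict gD Ddense st.
  by rewrite ltnn eqxx kb_catl rN.
have tri : forall a b : W, ltK a b \/ a = b \/ ltK b a by case: cW => _ [].
have [Vc nl] := vderiv_dec (fun a b c => @kb_trans _ _ _) tri dec hchi.
by apply: nl; rewrite (piE _ Vc).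
Qed.
End HardComb.
Section Analysis.
Variables (R : realType) (M : Type) (d : M -> M -> R).
Hypothesis hmet : is_metric d.
Hypothesis hcomp : metric_complete d.
Variables (D : M -> Prop) (gD : M -> nat).
Hypothesis gDinj : forall x y, D x -> D y -> gD x = gD y -> x = y.
Hypothesis Ddense : forall x e, 0 < e -> exists y, D y /\ d x y < e.
Variables (n : nat) (a : nat -> nat) (chi_ : nat -> bunch M).
Hypothesis n0 : (0 < n)%N.
Hypothesis hV : forall m, VMQC d n%:R (chi_ m).
Hypothesis hsize : forall m, (m <= size (Gs (bG (chi_ m))))%N.
Hypothesis hcode : forall m j, (1 <= j <= m)%N -> code gD Ddense (chi_ m) j = a j.

Lemma dsym x y : d x y = d y x. Proof. exact: (proj1 (proj2 hmet)). Qed.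
Lemma dtri x y z : d x z <= d x y + d y z. Proof. exact: (proj2 (proj2 hmet)). Qed.
Lemma dxx x : d x x = 0. Proof. exact: (proj2 (proj1 hmet x x) erefl). Qed.

Definition Gj j := take j (Gs (bG (chi_ j))).

Lemma code_pair m j : (1 <= j <= m)%N ->
  take j (Gs (bG (chi_ m))) = Gj j /\
  [seq gD (approx Ddense j (bx (chi_ m) (mkf j (Gj j) t))) | t <- tuples j j] =
  [seq gD (approx Ddense j (bx (chi_ j) (mkf j (Gj j) t))) | t <- tuples j j].
Proof.
move=> /andP [j1 jm].
have := hcode (m:=m) (j:=j); rewrite j1 jm => /(_ isT).
rewrite -(hcode (m:=j) (j:=j)); last by rewrite j1 leqnn.
rewrite /code => /(pcan_inj pickleK) [E1 E2]; split; first exact: E1.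
by rewrite E1 in E2.
Qed.

Lemma Gtake m j : (j <= m)%N -> take j (Gs (bG (chi_ m))) = Gj j.
Proof.
case: j => [|j] jm; first by rewrite /Gj !take0.
by have [] := code_pair (m:=m) (j:=j.+1) jm.
Qed.

Lemma size_Gj j : size (Gj j) = j.
Proof. by rewrite /Gj size_take; case: ltnP => // h; apply/eqP; rewrite eqn_leq h hsize. Qed.

Definition h l := nth 0%N (Gj l.+1) l.

Lemma Gj_nth j l : (l < j)%N -> nth 0%N (Gj j) l = h l.
Proof.
move=> lj; rewrite /h -(Gtake (m:=j) (j:=l.+1)) // /Gj !nth_take //.
Qed.

Lemma uniq_Gj j : uniq (Gj j).
Proof. exact: take_uniq (uniq_Gs _). Qed.

Lemma memGj j k : reflect (exists2 l, (l < j)%N & k = h l) (k \in Gj j).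
Proof.
apply: (iffP idP).
  move=> kG; exists (index k (Gj j)); first by rewrite -{2}(size_Gj j) index_mem.
  by rewrite -(@Gj_nth j) ?nth_index // -{2}(size_Gj j) index_mem.
by move=> [l lj ->]; rewrite -(Gj_nth lj) mem_nth // size_Gj.
Qed.

Lemma indexGj j l : (l < j)%N -> index (h l) (Gj j) = l.
Proof. by move=> lj; rewrite -(Gj_nth lj) index_uniq ?uniq_Gj ?size_Gj. Qed.

Lemma h_inj l l' : h l = h l' -> l = l'.
Proof.
move=> e; have l1 : (l < (maxn l l').+1)%N by rewrite ltnS leq_maxl.
have l2 : (l' < (maxn l l').+1)%N by rewrite ltnS leq_maxr.
by rewrite -(indexGj l1) e indexGj.
Qed.

Lemma Gj_sub j m k : (j <= m)%N -> k \in Gj j -> k \in bG (chi_ m).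
Proof. by move=> jm; rewrite -(Gtake jm) => /mem_take; rewrite mem_Gs. Qed.

Lemma Gj_mono j m k : (j <= m)%N -> k \in Gj j -> k \in Gj m.
Proof.
move=> jm /memGj [l lj ->]; apply/memGj; exists l => //.
exact: leq_trans lj jm.
Qed.

Lemma map_eq_mem (A B : eqType) (f g : A -> B) s x :
  map f s = map g s -> x \in s -> f x = g x.
Proof.
elim: s => [|y s IH] //= [e1 e2]; rewrite in_cons => /orP [/eqP ->//|].
exact: IH.
Qed.

Lemma close j m t : (1 <= j <= m)%N -> t \in tuples j j ->
  d (bx (chi_ j) (mkf j (Gj j) t)) (bx (chi_ m) (mkf j (Gj j) t)) <= eps R j + eps R j.
Proof.
move=> jm tt; have [_ E] := code_pair jm.
have e := map_eq_mem E tt.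
set u := bx (chi_ j) _ in e *; set v := bx (chi_ m) _ in e *.
have [Dv dv] := approxP Ddense j v; have [Du du] := approxP Ddense j u.
have ea := gDinj Dv Du e.
apply: ltW; apply: (le_lt_trans (dtri u (approx Ddense j u) v)).
by apply: ltrD => //; rewrite dsym -ea.
Qed.

Definition fl (m : nat) (r : R) : int := Num.floor (m.+1%:R * r).
Definition clip (m : nat) (z : int) : int := if (absz z <= m.+1 ^ 2)%N then z else 0.
Definition qv (m : nat) (z : int) : R := (clip m z)%:~R / m.+1%:R.

Lemma clip_bound m z : (absz (clip m z) <= m.+1 ^ 2)%N.
Proof. by rewrite /clip; case: ifP. Qed.

Lemma k_gt0 m : 0 < m.+1%:R :> R. Proof. by rewrite ltr0n. Qed.

Lemma qv_bound m z : `|qv m z| <= m.+1%:R.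
Proof.
rewrite /qv normrM normfV (ger0_norm (ltW (k_gt0 m))) ler_pdivrMr ?k_gt0 //.
rewrite -intr_norm -natr_absz -natrM mulnn ler_nat.
exact: clip_bound.
Qed.

Lemma qv_acc m B r : 0 <= B -> B + 1 <= m.+1%:R -> `|r| <= B ->
  `|qv m (fl m r) - r| <= eps R m.
Proof.
move=> B0 Bk rB; set k : R := m.+1%:R.
have k0 : 0 < k := k_gt0 m.
have /andP [f1 f2] := floor_itv (k * r).
rewrite -/(fl m r) in f1 f2; set z := fl m r in f1 f2 *.
rewrite intrD in f2.
move: rB; rewrite ler_norml => /andP [rB1 rB2].
have zb : `|z%:~R : R| <= k ^+ 2.
  have h1 : k * r <= k * B by apply: ler_wpM2l => //; apply: ltW.
  have h2 : - (k * B) <= k * r by rewrite -mulrN; apply: ler_wpM2l => //; apply: ltW.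
  have h3 : k * B + 1 <= k * k.
    have : k * (B + 1) <= k * k by apply: ler_wpM2l => //; apply: ltW.
    have : 1 <= k by rewrite ler1n.
    rewrite mulrDr mulr1; lra.
  rewrite expr2 ler_norml; apply/andP; split; lra.
have cz : clip m z = z.
  rewrite /clip ifT //; move: zb.
  by rewrite -intr_norm -natr_absz -natrX ler_nat.
rewrite /qv cz /eps.
have -> : z%:~R / k - r = (z%:~R - k * r) / k.
  by rewrite mulrBl mulrAC mulfV ?mul1r // gt_eqF.
rewrite normrM normfV (ger0_norm (ltW k0)) ler_pdivrMr // mulVf ?gt_eqF //.
rewrite ler_norml; apply/andP; split; lra.
Qed.

Definition tup m (x : nat -> R) : seq int := mkseq (fun l => clip m (fl m (x l))) m.
Definition am m (x : nat -> R) : nat -> rat := mkf m (Gj m) (tup m x).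

Lemma tup_mem m x : tup m x \in tuples m m.
Proof.
have := @mem_tuples m (tup m x); rewrite size_mkseq; apply.
by apply/allP => z /mapP [l _ ->]; apply: clip_bound.
Qed.

Lemma am_h m x l : (l < m)%N -> (ratr (am m x (h l)) : R) = qv m (fl m (x l)).
Proof.
move=> lm; rewrite /am /mkf.
have -> : h l \in Gj m by apply/memGj; exists l.
by rewrite indexGj // nth_mkseq // fmorph_div rmorph_int rmorph_nat.
Qed.

Lemma am_out m x k : k \notin Gj m -> am m x k = 0.
Proof. by rewrite /am /mkf => /negbTE ->. Qed.

Lemma am_bound m x k : `|ratr (am m x k) : R| <= m.+1%:R.
Proof.
case kG: (k \in Gj m); last by rewrite am_out ?kG // rmorph0 normr0 ler0n.
move/memGj: kG => [l lm ->]; rewrite am_h //; exact: qv_bound.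
Qed.

Lemma am_supp m x : in_QG (Gj m) (am m x).
Proof. exact: mkf_supp. Qed.

Lemma eps_ge0 m : 0 <= eps R m. Proof. exact: ltW (eps_gt0 R m). Qed.

Lemma eps_le m m' : (m <= m')%N -> eps R m' <= eps R m.
Proof. by move=> mm; rewrite /eps lef_pV2 ?posrE ?ltr0n // ler_nat. Qed.

Lemma dist3 (u w v z : R) : `|u - z| <= `|u - w| + `|w - v| + `|v - z|.
Proof.
apply: (le_trans (ler_distD w u z)); rewrite -addrA lerD2l.
exact: ler_distD.
Qed.

Lemma q_le m x y B : 0 <= B -> B + 1 <= m.+1%:R ->
  (forall l, `|x l| <= B) -> (forall l, `|y l| <= B) ->
  qdist R (am m x) (am m y) <= supnorm (fun l => x l - y l) + (eps R m + eps R m).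
Proof.
move=> B0 Bk hx hy; apply: supnorm_le => k.
case kG: (k \in Gj m); last first.
  rewrite !am_out ?kG // rmorph0 subr0 normr0.
  by apply: addr_ge0; [apply: supnorm_ge0|apply: addr_ge0; apply: eps_ge0].
move/memGj: kG => [l lm ->]; rewrite !am_h //.
have s1 : `|x l - y l| <= supnorm (fun l => x l - y l).
  apply: (@le_supnorm _ _ (B + B)) => k0; apply: (le_trans (ler_normB _ _)).
  exact: lerD.
have a1 := qv_acc B0 Bk (hx l); have a2 := qv_acc B0 Bk (hy l).
rewrite distrC in a2.
have := dist3 (qv m (fl m (x l))) (x l) (y l) (qv m (fl m (y l))).
lra.
Qed.

Lemma sup_le_q m x y B e : 0 <= B -> B + 1 <= m.+1%:R ->
  (forall l, `|x l| <= B) -> (forall l, `|y l| <= B) ->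
  (forall l, (m <= l)%N -> `|x l| <= e) -> (forall l, (m <= l)%N -> `|y l| <= e) ->
  supnorm (fun l => x l - y l) <= qdist R (am m x) (am m y) + (eps R m + eps R m) + (e + e).
Proof.
move=> B0 Bk hx hy tx ty; apply: supnorm_le => l.
have q0 : 0 <= qdist R (am m x) (am m y) by apply: supnorm_ge0.
have e0 : 0 <= eps R m := eps_ge0 m.
case: (ltnP l m) => lm; last first.
  have := ler_normB (x l) (y l); have := tx l lm; have := ty l lm; lra.
have s1 : `|qv m (fl m (x l)) - qv m (fl m (y l))| <= qdist R (am m x) (am m y).
  rewrite -!am_h //; apply: (@le_supnorm _ _ (m.+1%:R + m.+1%:R)) => k0.
  by apply: (le_trans (ler_normB _ _)); apply: lerD; apply: am_bound.
have a1 := qv_acc B0 Bk (hx l); have a2 := qv_acc B0 Bk (hy l).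
rewrite distrC in a1.
have := dist3 (x l) (qv m (fl m (x l))) (qv m (fl m (y l))) (y l).
have t1 : 0 <= `|x l| by []; have t2 : 0 <= `|y l| by [].
have ee : 0 <= e by apply: le_trans (tx m (leqnn m)).
lra.
Qed.

Lemma q_cauchy m m' x B e : (m <= m')%N -> 0 <= B -> B + 1 <= m.+1%:R ->
  (forall l, `|x l| <= B) -> (forall l, (m <= l)%N -> `|x l| <= e) ->
  qdist R (am m x) (am m' x) <= (eps R m + eps R m) + e.
Proof.
move=> mm B0 Bk hx tx; apply: supnorm_le => k.
have ee : 0 <= e by apply: le_trans (tx m (leqnn m)).
have e0 : 0 <= eps R m := eps_ge0 m.
have em := eps_le mm.
have Bk' : B + 1 <= m'.+1%:R.
  by apply: (le_trans Bk); rewrite ler_nat ltnS.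
case kG: (k \in Gj m'); last first.
  rewrite !am_out ?kG //; last by apply/negP => /(Gj_mono mm); rewrite kG.
  by rewrite rmorph0 subr0 normr0; lra.
move/memGj: kG => [l lm ->].
case: (ltnP l m) => lm'.
  rewrite !am_h //.
  have a1 := qv_acc B0 Bk (hx l); have a2 := qv_acc B0 Bk' (hx l).
  rewrite distrC in a2.
  have := ler_distD (x l) (qv m (fl m (x l))) (qv m' (fl m' (x l))).
  lra.
rewrite am_out; last first.
  by apply/negP => /memGj [l' l'm /h_inj el]; subst l'; rewrite ltnNge lm' in l'm.
rewrite rmorph0 add0r normrN am_h //.
have a2 := qv_acc B0 Bk' (hx l).
have := ler_distD (x l) (qv m' (fl m' (x l))) 0.
rewrite !subr0; have := tx l lm'; lra.
Qed.

Definition S m x := bx (chi_ m) (am m x).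

Lemma am_QG m m' x : (m <= m')%N -> in_QG (bG (chi_ m')) (am m x).
Proof. by move=> mm k /am_supp; apply: Gj_sub. Qed.

Lemma S_bilip m x y :
  (n%:R)^-1 * qdist R (am m x) (am m y) <= d (S m x) (S m y) /\
  d (S m x) (S m y) <= n%:R * qdist R (am m x) (am m y).
Proof. by apply: hV; apply: am_QG. Qed.

Lemma S_cauchy m m' x : (1 <= m)%N -> (m <= m')%N ->
  d (S m x) (S m' x) <= (eps R m + eps R m) + n%:R * qdist R (am m x) (am m' x).
Proof.
move=> m1 mm.
apply: (le_trans (dtri _ (bx (chi_ m') (am m x)) _)); apply: lerD.
  by apply: close; [rewrite m1 mm|apply: tup_mem].
by have [] := hV (am_QG (x:=x) mm) (am_QG (x:=x) (leqnn m')).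
Qed.

Lemma ev_eps (e : R) : 0 < e -> exists N, forall m, (N <= m)%N -> eps R m <= e.
Proof.
move=> e0; exists (Num.truncn e^-1) => m hm.
rewrite /eps -[e]invrK lef_pV2 ?posrE ?invr_gt0 ?ltr0n //.
apply: ltW; apply: (lt_le_trans (truncnS_gt _)); by rewrite ler_nat ltnS.
Qed.

Lemma ev_k (B : R) : exists N, forall m, (N <= m)%N -> B + 1 <= m.+1%:R.
Proof.
exists (Num.truncn (B + 1)) => m hm.
apply: ltW; apply: (lt_le_trans (truncnS_gt _)); by rewrite ler_nat ltnS.
Qed.

Lemma c0_tail (x : nat -> R) e : in_c0 x -> 0 < e ->
  exists N, forall l, (N <= l)%N -> `|x l| <= e.
Proof. by move=> hx e0; have [N hN] := hx e e0; exists N => l /hN /ltW. Qed.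

Lemma c0_bound (x : nat -> R) : in_c0 x -> exists B, 0 <= B /\ forall l, `|x l| <= B.
Proof.
move=> hx; have [N hN] := c0_tail hx ltr01.
have : exists B, 0 <= B /\ forall l, (l < N)%N -> `|x l| <= B.
  elim: N {hN} => [|N [B [B0 hB]]]; first by exists 0.
  exists (B + `|x N|); split; first by apply: addr_ge0.
  move=> l; rewrite ltnS leq_eqVlt => /orP [/eqP ->|lN].
    by rewrite lerDr.
  by apply: (le_trans (hB l lN)); rewrite lerDl.
move=> [B [B0 hB]]; exists (B + 1); split; first by apply: addr_ge0.
move=> l; case: (ltnP l N) => lN.
  by apply: (le_trans (hB l lN)); rewrite lerDl.
by apply: (le_trans (hN l lN)); rewrite lerDr.
Qed.

Definition conv (u : nat -> M) (L : M) :=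
  forall e, 0 < e -> exists N, forall m, (N <= m)%N -> d (u m) L < e.

Lemma good (x y : nat -> R) (e : R) : in_c0 x -> in_c0 y -> 0 < e ->
  exists B, 0 <= B /\ (forall l, `|x l| <= B) /\ (forall l, `|y l| <= B) /\
  exists N, forall m, (N <= m)%N -> [/\ (1 <= m)%N, eps R m <= e, B + 1 <= m.+1%:R,
    (forall l, (m <= l)%N -> `|x l| <= e) & (forall l, (m <= l)%N -> `|y l| <= e)].
Proof.
move=> hx hy e0.
have [Bx [Bx0 hBx]] := c0_bound hx; have [By [By0 hBy]] := c0_bound hy.
exists (Bx + By); split; first exact: addr_ge0.
split; first by move=> l; apply: (le_trans (hBx l)); rewrite lerDl.
split; first by move=> l; apply: (le_trans (hBy l)); rewrite lerDr.
have [N1 h1] := ev_eps e0; have [N2 h2] := ev_k (Bx + By).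
have [N3 h3] := c0_tail hx e0; have [N4 h4] := c0_tail hy e0.
exists (maxn 1 (maxn (maxn N1 N2) (maxn N3 N4))) => m.
rewrite !geq_max => /andP [m1 /andP [/andP [m2 m3] /andP [m4 m5]]].
split => //; [exact: h1|exact: h2| |].
  by move=> l ml; apply: h3; apply: leq_trans ml.
by move=> l ml; apply: h4; apply: leq_trans ml.
Qed.

Lemma S_conv x : in_c0 x -> exists L, conv (S^~ x) L.
Proof.
move=> hx; apply: hcomp => e e0.
have nR0 : 0 <= n%:R :> R by [].
pose c : R := 3 + 3 * n%:R.
have c0 : 0 < c by rewrite /c; lra.
have de0 : 0 < e / c by rewrite divr_gt0.
have ce : e = c * (e / c) by rewrite mulrC mulfVK // gt_eqF.
  rewrite /c in ce.
have [B [B0 [hB [_ [N hN]]]]] := good hx hx de0.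
suff H : forall m m', (N <= m)%N -> (m <= m')%N -> d (S m x) (S m' x) < e.
  exists N => m m' hm hm'; case: (leqP m m') => mm; first exact: H.
  by rewrite dsym; apply: H => //; apply: ltnW.
move=> m m' hm mm; have [m1 em Bk tx _] := hN m hm.
have q := q_cauchy mm B0 Bk hB tx.
have s := S_cauchy x m1 mm.
have : n%:R * qdist R (am m x) (am m' x) <= n%:R * (eps R m + eps R m + e / c).
  exact: ler_wpM2l.
move: s; set Q := qdist R _ _; set dd := d _ _.
have : n%:R * (eps R m) <= n%:R * (e / c) by apply: ler_wpM2l.
have : 0 < e / c by [].
nra.
Qed.

Definition F (x : nat -> R) : M :=
  match pselect (exists L, conv (S^~ x) L) with
  | left h => proj1_sig (cid h) | right _ => S 0 x end.

Lemma F_conv x : in_c0 x -> conv (S^~ x) (F x).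
Proof.
move=> hx; rewrite /F; case: pselect => [h|h]; first exact: proj2_sig (cid h).
by case: h; apply: S_conv.
Qed.

Lemma embed : c0_bilip_embeds d.
Proof.
have nR : 0 < n%:R :> R by rewrite ltr0n.
exists F, (n%:R)^-1, n%:R; split; first by rewrite invr_gt0.
split => // x y hx hy.
set s := supnorm _.
have key : forall e, 0 < e -> exists m, [/\ d (S m x) (F x) < e, d (S m y) (F y) < e,
   qdist R (am m x) (am m y) <= s + (e + e) &
   s <= qdist R (am m x) (am m y) + (e + e) + (e + e)].
  move=> e e0.
  have [B [B0 [hBx [hBy [N hN]]]]] := good hx hy e0.
  have [N1 h1] := F_conv hx e0; have [N2 h2] := F_conv hy e0.
  pose m := maxn N (maxn N1 N2).
  have [m1 em Bk tx ty] := hN m (leq_maxl _ _).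
  exists m; split.
  - by apply: h1; rewrite /m !leq_max leqnn !orbT.
  - by apply: h2; rewrite /m !leq_max leqnn !orbT.
  - by apply: (le_trans (q_le B0 Bk hBx hBy)); rewrite lerD2l lerD.
  - apply: (le_trans (sup_le_q B0 Bk hBx hBy tx ty)).
    by rewrite lerD2r lerD2l lerD.
have s0 : 0 <= s by apply: supnorm_ge0.
have ni0 : 0 < (n%:R : R)^-1 by rewrite invr_gt0.
split.
  apply/ler_addgt0Pr => e e0.
  pose c : R := 2 + 4 * (n%:R)^-1.
  have c0 : 0 < c by rewrite /c; lra.
  have de0 : 0 < e / c by rewrite divr_gt0.
  have ce : e = c * (e / c) by rewrite mulrC mulfVK // gt_eqF.
  rewrite /c in ce.
  have [m [d1 d2 q1 q2]] := key _ de0.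
  have [b1 _] := S_bilip m x y.
  have t1 := dtri (S m x) (F x) (S m y).
  have t2 := dtri (F x) (F y) (S m y).
  rewrite (dsym (F y)) in t2.
  have : (n%:R)^-1 * s <= (n%:R)^-1 * (qdist R (am m x) (am m y) + 4 * (e / c)).
    apply: ler_wpM2l; [exact: ltW|lra].
  lra.
apply/ler_addgt0Pr => e e0.
pose c : R := 2 + 2 * n%:R.
have c0 : 0 < c by rewrite /c; lra.
have de0 : 0 < e / c by rewrite divr_gt0.
have ce : e = c * (e / c) by rewrite mulrC mulfVK // gt_eqF.
  rewrite /c in ce.
have [m [d1 d2 q1 q2]] := key _ de0.
have [_ b2] := S_bilip m x y.
have t1 := dtri (F x) (S m x) (F y).
have t2 := dtri (S m x) (S m y) (F y).
rewrite [d (F x) (S m x)]dsym in t1.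
have : n%:R * qdist R (am m x) (am m y) <= n%:R * (s + 2 * (e / c)).
  apply: ler_wpM2l; [exact: ltW|lra].
lra.
Qed.
End Analysis.

Lemma pref_info (R : realType) (M : Type) (d : M -> M -> R) (D : M -> Prop) (gD : M -> nat)
  (Ddense : forall x (e : R), 0 < e -> exists y, D y /\ d x y < e)
  (a : nat -> nat) m (n' : nat) (chi : bunch M) :
  pref (mkseq a m.+1) (n' :: piL gD Ddense chi) ->
  [/\ n' = a 0%N, (m <= size (Gs (bG chi)))%N &
      forall j, (1 <= j <= m)%N -> code gD Ddense chi j = a j].
Proof.
move=> /prefP [r E].
have Hn : forall j, (j <= m)%N -> nth 0%N (n' :: piL gD Ddense chi) j = a j.
  move=> j jm; rewrite E nth_cat.
  by rewrite (size_mkseq a m.+1) ltnS jm nth_mkseq // ltnS.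
have sz : (m <= size (Gs (bG chi)))%N.
  have := congr1 size E; rewrite size_cat (size_mkseq a m.+1) addSn.
  by rewrite /= /piL size_map size_iota => -[->]; rewrite leq_addr.
split => //; first by have := Hn 0%N isT.
move=> [|j] // /andP [_ jm]; rewrite -(Hn _ jm) /= /piL.
rewrite (nth_map 0%N); last by rewrite size_iota; apply: leq_trans jm sz.
by rewrite nth_iota ?add1n //; apply: leq_trans jm sz.
Qed.

Theorem proposition3p3 (R : realType) (M : Type) (d : M -> M -> R)
  (hmet : is_metric d) (hcomp : metric_complete d) (hsep : metric_separable d) :
  c0_bilip_embeds d <-> Lip_c0_index_ge_omega1 d.
Proof.
split; first exact: easy_dir.
move=> H; have [D [[gD gDinj] Ddense]] := hsep.
have nA := hard_comb hmet (Ddense := Ddense) (gD := gD) H.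
have [b [b0 hb]] := branch_of_nacc nA.
pose a k := nth 0%N (b k.+1) k.
have bk : forall k, b k = mkseq a k.
  elim=> [|k IH] //; have [_ [x E]] := hb k.
  rewrite mkseqS -IH -cats1 E; congr (_ ++ [:: _]).
  by rewrite /a E nth_cat IH (size_mkseq a k) ltnn subnn.
have ex : forall m, exists chi, [/\ (0 < a 0%N)%N, VMQC d (a 0%N)%:R chi,
    (m <= size (Gs (bG chi)))%N &
    forall j, (1 <= j <= m)%N -> code gD Ddense chi j = a j].
  move=> m; have [Tb _] := hb m; move: Tb; rewrite bk.
  move=> [n' [chi [n0 [V p]]]]; have [e1 e2 e3] := pref_info p.
  by exists chi; subst n'; split.
pose chi_ m := proj1_sig (cid (ex m)).
have P : forall m, _ := fun m => proj2_sig (cid (ex m)).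
have [n0 _ _ _] := P 0%N.
apply: (embed hmet hcomp gDinj (n := a 0%N) (a := a) (chi_ := chi_) n0).
- by move=> m; have [] := P m.
- by move=> m; have [] := P m.
- by move=> m j hj; have [_ _ _ ->] := P m.
Qed.
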